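(* Let $\alpha\in(1,2)$ and let $p\ge3$ be an odd integer. Then $$f^{p,0}(\theta)\le f^{p,\alpha}(\theta)\le f^{p,2}(\theta)\qquad\text{for all }\theta\text{ with }|\theta|\in[1,\pi].$$
   Context: For real $\beta\ge0$ and integer $p\ge 2$, $f^{p,\beta}(\theta)=\sum_{l\in\mathbb Z}|\theta+2l\pi|^{\beta}\left(\frac{\sin(\theta/2+l\pi)}{\theta/2+l\pi}\right)^{p+1}$ (with $\frac{\sin x}{x}:=1$ at $x=0$ and $|x|^0:=1$); in particular $f^{p,0}$ and $f^{p,2}$ are given by this formula with $\beta=0$ and $\beta=2$. *)

(* Defs.v *)
From Stdlib Require Import Reals Lra.
From Coquelicot Require Import Coquelicot.
Open Scope R_scope.

Definition sinc (x : R) : R := if Req_EM_T x 0 then 1 else sin x / x.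

(* |x|^beta with the convention |x|^0 = 1 (also at x = 0), and 0^beta = 0 for beta > 0 *)
Definition abspow (x beta : R) : R :=
  if Req_EM_T beta 0 then 1
  else if Req_EM_T x 0 then 0 else Rpower (Rabs x) beta.

Definition fterm (p : nat) (beta theta : R) (l : Z) : R :=
  abspow (theta + 2 * IZR l * PI) beta * (sinc (theta / 2 + IZR l * PI)) ^ (p + 1).

(* bilateral sum over l in Z: pair l = n with l = -n-1 *)
Definition fpb (p : nat) (beta theta : R) : R :=
  Series (fun n : nat => fterm p beta theta (Z.of_nat n)
                         + fterm p beta theta (- Z.of_nat n - 1)%Z).

(* Main.v *)
Require Import Defs.
From Stdlib Require Import Reals Lra Lia Psatz.
From Coquelicot Require Import Coquelicot.
Open Scope R_scope.

Lemma PI_gt3 : 3 < PI.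
Proof. pose proof PI2_3_2; lra. Qed.

Lemma fterm_eq p b th l :
  fterm p b th l = abspow (th + 2 * IZR l * PI) b * sinc ((th + 2 * IZR l * PI) / 2) ^ (p + 1).
Proof. unfold fterm. f_equal. f_equal. f_equal. field. Qed.

Lemma even_pow_nonneg (s : R) k : 0 <= s ^ (2 * k).
Proof. rewrite pow_mult. apply pow_le. nra. Qed.

Lemma abspow_nonneg x b : 0 <= abspow x b.
Proof.
  unfold abspow. destruct (Req_EM_T b 0); [lra|]. destruct (Req_EM_T x 0); [lra|].
  unfold Rpower. left. apply exp_pos.
Qed.

Lemma abspow2 x : x <> 0 -> abspow x 2 = x ^ 2.
Proof.
  intro Hx. unfold abspow. destruct (Req_EM_T 2 0); [lra|]. destruct (Req_EM_T x 0); [lra|].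
  replace 2 with (INR 2) by (simpl; lra). rewrite Rpower_pow.
  - simpl. rewrite !Rmult_1_r. rewrite <- Rabs_mult. apply Rabs_right. nra.
  - apply Rabs_pos_lt; auto.
Qed.

Lemma termwise x a : 1 < a < 2 -> 1 <= Rabs x ->
  abspow x 0 <= abspow x a <= abspow x 2.
Proof.
  intros Ha Hx. assert (x <> 0) by (intro; subst; rewrite Rabs_R0 in Hx; lra).
  unfold abspow.
  destruct (Req_EM_T 0 0); [|lra]. destruct (Req_EM_T a 0); [lra|].
  destruct (Req_EM_T 2 0); [lra|]. destruct (Req_EM_T x 0); [lra|].
  split.
  - rewrite <- (Rpower_O (Rabs x)) at 1 by lra. apply Rle_Rpower; lra.
  - apply Rle_Rpower; lra.
Qed.

Lemma absx_ge1 th l : 1 <= Rabs th <= PI -> 1 <= Rabs (th + 2 * IZR l * PI).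
Proof.
  intros [H1 H2]. pose proof PI_gt3.
  destruct (Z.lt_trichotomy l 0) as [Hl|[Hl|Hl]].
  - assert (IZR l <= -1) by (apply IZR_le; lia).
    assert (-PI <= th <= PI) by (unfold Rabs in H2; destruct (Rcase_abs th); lra).
    rewrite Rabs_left1; nra.
  - subst. simpl. replace (th + 2 * 0 * PI) with th by ring. lra.
  - assert (1 <= IZR l) by (apply IZR_le; lia).
    assert (-PI <= th <= PI) by (unfold Rabs in H2; destruct (Rcase_abs th); lra).
    rewrite Rabs_right; nra.
Qed.

Lemma tail_bound p k x : p = (2 * k + 1)%nat -> (1 <= k)%nat -> 2 <= Rabs x ->
  abspow x 2 * sinc (x / 2) ^ (p + 1) <= 16 / x ^ 2.
Proof.
  intros Hp Hk Hx. assert (Hx0 : x <> 0) by (intro; subst; rewrite Rabs_R0 in Hx; lra).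
  rewrite abspow2 by auto. unfold sinc. destruct (Req_EM_T (x/2) 0) as [e|_]; [lra|].
  replace (p + 1)%nat with (2 * (k + 1))%nat by lia. rewrite pow_mult.
  set (t := (sin (x / 2) / (x / 2)) ^ 2).
  assert (HX : 4 <= x ^ 2).
  { replace (x^2) with (Rabs x ^ 2) by (unfold Rabs; destruct (Rcase_abs x); ring). nra. }
  assert (Ht0 : 0 <= t) by (unfold t; nra).
  assert (Ht : t * x ^ 2 <= 4).
  { unfold t. replace ((sin (x / 2) / (x / 2)) ^ 2 * x ^ 2) with (4 * sin (x/2) ^ 2) by (field; auto).
    pose proof (SIN_bound (x/2)). nra. }
  assert (Ht1 : t <= 1).
  { apply Rmult_le_reg_r with (x ^ 2); nra. }
  replace (k + 1)%nat with (2 + (k - 1))%nat by lia. rewrite pow_add.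
  assert (Hr : 0 <= t ^ (k - 1) <= 1).
  { split. apply pow_le; auto. rewrite <- (pow1 (k-1)). apply pow_incr. lra. }
  apply Rmult_le_reg_r with (x ^ 2); [lra|].
  unfold Rdiv. rewrite (Rmult_assoc 16), Rinv_l, Rmult_1_r by lra.
  set (r := t ^ (k - 1)) in *.
  set (X := x ^ 2) in *.
  assert (0 <= t * X) by nra.
  assert ((t * X) ^ 2 <= 16) by nra.
  replace (X * (t ^ 2 * r) * X) with ((t * X) ^ 2 * r) by ring. nra.
Qed.

Definition u (n : nat) : R := / (INR n + 1) - / (INR n + 2).

Lemma sum_u N : sum_n u N = 1 - / (INR N + 2).
Proof.
  induction N.
  - rewrite sum_O. unfold u. simpl. rewrite Rplus_0_l, Rinv_1. reflexivity.
  - rewrite sum_Sn, IHN.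
    change ((1 - / (INR N + 2)) + u (S N) = 1 - / (INR (S N) + 2)).
    unfold u. rewrite !S_INR.
    pose proof (pos_INR N). field. split; lra.
Qed.

Lemma ex_series_u : ex_series u.
Proof.
  exists 1. unfold is_series.
  change (is_lim_seq (sum_n u) 1).
  apply is_lim_seq_ext with (fun N => 1 - / (INR N + 2)).
  { intros; rewrite sum_u; auto. }
  replace (Finite 1) with (Rbar_minus 1 0) by (simpl; f_equal; ring).
  apply is_lim_seq_minus'. apply is_lim_seq_const.
  replace (Finite 0) with (Rbar_inv p_infty) by reflexivity.
  apply is_lim_seq_inv. 2: discriminate.
  apply is_lim_seq_plus with p_infty 2. apply is_lim_seq_INR. apply is_lim_seq_const.
  reflexivity.
Qed.

Lemma sinc_pow_nonneg p y : Nat.Odd p -> 0 <= sinc y ^ (p + 1).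
Proof.
  intros [k Hk]. replace (p + 1)%nat with (2 * (k + 1))%nat by lia. apply even_pow_nonneg.
Qed.

Lemma term_nonneg p b th l : Nat.Odd p -> 0 <= fterm p b th l.
Proof.
  intro Hp. rewrite fterm_eq. apply Rmult_le_pos. apply abspow_nonneg. apply sinc_pow_nonneg; auto.
Qed.

Lemma term_mono p a th l : Nat.Odd p -> 1 < a < 2 -> 1 <= Rabs th <= PI ->
  fterm p 0 th l <= fterm p a th l <= fterm p 2 th l.
Proof.
  intros Hp Ha Hth. rewrite !fterm_eq.
  pose proof (termwise (th + 2 * IZR l * PI) a Ha (absx_ge1 th l Hth)).
  pose proof (sinc_pow_nonneg p ((th + 2 * IZR l * PI) / 2) Hp).
  split; apply Rmult_le_compat_r; tauto.
Qed.

Lemma inv_sq_bound x n : INR n + 2 <= Rabs x -> 16 / x ^ 2 <= 16 / (INR n + 2) ^ 2.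
Proof.
  intro H. pose proof (pos_INR n).
  assert (Hx2 : x ^ 2 = Rabs x ^ 2) by (unfold Rabs; destruct (Rcase_abs x); ring).
  rewrite Hx2. unfold Rdiv. apply Rmult_le_compat_l; [lra|].
  apply Rinv_le_contravar. nra. apply pow_incr. lra.
Qed.

Lemma tail_term p th l n : (3 <= p)%nat -> Nat.Odd p -> 1 <= Rabs th <= PI ->
  INR n + 2 <= Rabs (th + 2 * IZR l * PI) ->
  fterm p 2 th l <= 16 / (INR n + 2) ^ 2.
Proof.
  intros H3 [k Hk] Hth Hx. rewrite fterm_eq. pose proof (pos_INR n).
  eapply Rle_trans. apply (tail_bound p k). lia. lia. lra.
  apply inv_sq_bound. auto.
Qed.

Lemma u_bound n : 32 / (INR n + 2) ^ 2 <= 64 * u n.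
Proof.
  unfold u. pose proof (pos_INR n).
  replace (/ (INR n + 1) - / (INR n + 2)) with (/ ((INR n + 1) * (INR n + 2))) by (field; lra).
  unfold Rdiv. apply Rmult_le_reg_r with ((INR n + 1) * (INR n + 2) ^ 2). nra.
  field_simplify; try lra.
Qed.

Theorem proposition5p4 (alpha : R) (p : nat) (theta : R) :
  1 < alpha < 2 -> (3 <= p)%nat -> Nat.Odd p ->
  1 <= Rabs theta <= PI ->
  fpb p 0 theta <= fpb p alpha theta <= fpb p 2 theta.
Proof.
  intros Ha Hp3 Hodd Hth. unfold fpb.
  set (g := fun b n => fterm p b theta (Z.of_nat n) + fterm p b theta (- Z.of_nat n - 1)).
  change (Series (g 0) <= Series (g alpha) <= Series (g 2)).
  assert (Hm : forall n, 0 <= g 0 n <= g alpha n /\ g alpha n <= g 2 n).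
  { intro n. unfold g.
    pose proof (term_mono p alpha theta (Z.of_nat n) Hodd Ha Hth).
    pose proof (term_mono p alpha theta (- Z.of_nat n - 1) Hodd Ha Hth).
    pose proof (term_nonneg p 0 theta (Z.of_nat n) Hodd).
    pose proof (term_nonneg p 0 theta (- Z.of_nat n - 1) Hodd). lra. }
  assert (Hex2 : ex_series (g 2)).
  { apply ex_series_incr_1.
    apply (@ex_series_le R_AbsRing R_CompleteNormedModule _ (fun n => u n * 64)).
    2: { apply ex_series_scal_r. apply ex_series_u. }
    intro n. change (norm (g 2 (S n))) with (Rabs (g 2 (S n))).
    rewrite Rabs_right by (specialize (Hm (S n)); lra).
    eapply Rle_trans; [|rewrite Rmult_comm; apply u_bound]. unfold g.
    pose proof PI_gt3. pose proof (pos_INR n).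
    assert (Hb : -PI <= theta <= PI) by (unfold Rabs in Hth; destruct (Rcase_abs theta); lra).
    replace (32 / (INR n + 2) ^ 2) with (16 / (INR n + 2) ^ 2 + 16 / (INR n + 2) ^ 2) by (field; lra).
    apply Rplus_le_compat; apply tail_term; auto.
    - rewrite <- INR_IZR_INZ, S_INR. rewrite Rabs_right; nra.
    - rewrite minus_IZR, opp_IZR, <- INR_IZR_INZ, S_INR. rewrite Rabs_left1; nra. }
  assert (Hexa : ex_series (g alpha)).
  { apply (@ex_series_le R_AbsRing R_CompleteNormedModule _ (g 2)); auto. intro n.
    change (norm (g alpha n)) with (Rabs (g alpha n)).
    specialize (Hm n). rewrite Rabs_right; lra. }
  split; apply Series_le; auto; intro n; specialize (Hm n); lra.
Qed.
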